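(* Let $d\in\mathbb{N}$, $\kappa\in(0,\infty)$, and let $\mathfrak{l}\colon\mathbb{R}^d\times\mathbb{R}^d\to\mathbb{R}$ satisfy $\mathfrak{l}(\theta,\vartheta)=\frac{\kappa}{2}\|\theta-\vartheta\|^2$ for all $\theta,\vartheta\in\mathbb{R}^d$. Let $\gamma\in(0,\kappa^{-1})$, let $(\Omega,\mathcal{F},\mathbb{P})$ be a probability space, let $X_{n,m}\colon\Omega\to\mathbb{R}^d$, $(n,m)\in\mathbb{Z}^2$, be non-degenerate i.i.d. random variables, let $M,\mathfrak{M}\in\mathbb{N}$, and let $\Theta\colon\mathbb{N}_0\times\Omega\to\mathbb{R}^d$ satisfy for all $n\in\mathbb{N}$ $$\Theta_n=\Theta_{n-1}-\frac{\gamma}{M}\Big[\sum_{m=1}^M(\nabla_\theta\mathfrak{l})(\Theta_{n-1},X_{n,m})\Big].$$ Assume $\sup_{n,m\in\mathbb{Z}}\|X_{n,m}(\omega)\|<\infty$ for every $\omega\in\Omega$, that $(X_{n,m})_{(n,m)\in\mathbb{Z}^2}$ and $\Theta_0$ are independent, and let $N\in\mathbb{N}$. Then $$\mathbb{P}\Big(\bigcup_{n=N}^\infty\Big\{\sum_{m=1}^{\mathfrak{M}}\mathfrak{l}(\Theta_n,X_{n,-m})>\sum_{m=1}^{\mathfrak{M}}\mathfrak{l}(\Theta_{n-1},X_{n,-m})\Big\}\Big)=1.$$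
   Context: $\|\cdot\|$ is the Euclidean norm; $\nabla_\theta\mathfrak{l}$ is the gradient in the first argument. For a Borel measure $\mu$ on $\mathbb{R}^d$, $\operatorname{supp}(\mu)=\{x\in\mathbb{R}^d\colon\mu(B)>0\text{ for every open }B\ni x\}$; for a random variable $X$, $\operatorname{supp}(X)=\operatorname{supp}(\mathbb{P}_X)$ with $\mathbb{P}_X$ its law; $X$ is non-degenerate if the interior of $\operatorname{supp}(X)$ is non-empty. *)

(* Defs.v *)
From HB Require Import structures.
From mathcomp Require Import all_boot all_order all_algebra.
From mathcomp Require Import all_classical all_reals all_analysis.
Set Implicit Arguments. Unset Strict Implicit. Unset Printing Implicit Defensive.
Import Order.TTheory GRing.Theory Num.Theory.
Import numFieldNormedType.Exports.
Local Open Scope classical_set_scope.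
Local Open Scope ring_scope.

Definition eucl_norm (R : realType) (d : nat) (v : 'rV[R]_d) : R :=
  Num.sqrt (\sum_(i < d) v 0 i ^+ 2).

Definition gradient (R : realType) (d : nat) (f : 'rV[R]_d -> R) (x : 'rV[R]_d)
  : 'rV[R]_d := \row_(i < d) ('D_(delta_mx 0 i) f x).

Definition borel_set (R : realType) (d : nat) (B : set 'rV[R]_d) : Prop :=
  <<s [set U : set 'rV[R]_d | open U] >> B.

Definition rv_measurable (R : realType) (d : nat) (dO : measure_display)
  (Om : measurableType dO) (X : Om -> 'rV[R]_d) : Prop :=
  forall B, borel_set B -> measurable (X @^-1` B).

Definition rv_support (R : realType) (d : nat) (dO : measure_display)
  (Om : measurableType dO) (P : probability Om R) (X : Om -> 'rV[R]_d)
  : set 'rV[R]_d :=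
  [set x | forall B : set 'rV[R]_d, open B -> B x -> (0 < P (X @^-1` B))%E].

Definition non_degenerate (R : realType) (d : nat) (dO : measure_display)
  (Om : measurableType dO) (P : probability Om R) (X : Om -> 'rV[R]_d) : Prop :=
  (interior (rv_support P X)) !=set0.

Definition ident_distr (R : realType) (d : nat) (dO : measure_display)
  (Om : measurableType dO) (P : probability Om R) (I : Type)
  (X : I -> Om -> 'rV[R]_d) : Prop :=
  forall i j B, borel_set B -> P (X i @^-1` B) = P (X j @^-1` B).

Definition mutually_independent (R : realType) (d : nat) (dO : measure_display)
  (Om : measurableType dO) (P : probability Om R) (I : eqType)
  (X : I -> Om -> 'rV[R]_d) : Prop :=
  forall (J : seq I) (B : I -> set 'rV[R]_d), uniq J ->
    (forall j, j \in J -> borel_set (B j)) ->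
    P (\bigcap_(j in [set j | j \in J]) (X j @^-1` B j))
    = (\prod_(j <- J) P (X j @^-1` B j))%E.

Definition gen_sigma (R : realType) (d : nat) (dO : measure_display)
  (Om : measurableType dO) (I : Type) (X : I -> Om -> 'rV[R]_d) : set (set Om) :=
  <<s [set A | exists i B, borel_set B /\ A = X i @^-1` B] >>.

Definition indep_of_family (R : realType) (d : nat) (dO : measure_display)
  (Om : measurableType dO) (P : probability Om R) (I : Type)
  (X : I -> Om -> 'rV[R]_d) (Y : Om -> 'rV[R]_d) : Prop :=
  forall A B, gen_sigma X A -> borel_set B ->
    P (A `&` Y @^-1` B) = (P A * P (Y @^-1` B))%E.

(* Main.v *)
Require Import Defs.
From HB Require Import structures.
From mathcomp Require Import all_boot all_order all_algebra.
From mathcomp Require Import all_classical all_reals all_analysis.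
From mathcomp Require Import ring lra.
Import Order.TTheory GRing.Theory Num.Theory.
Import numFieldNormedType.Exports.
Local Open Scope classical_set_scope.
Local Open Scope ring_scope.
Set Implicit Arguments. Unset Strict Implicit. Unset Printing Implicit Defensive.
Section grad.
Variables (R : realType) (d : nat) (kappa : R).

Definition sq (v : 'rV[R]_d) : R := \sum_(i < d) v 0 i ^+ 2.

Lemma eucl_sq v : eucl_norm v ^+ 2 = sq v.
Proof. by rewrite /eucl_norm sqr_sqrtr // sumr_ge0 // => i _; rewrite sqr_ge0. Qed.

Lemma grad_quad (x a : 'rV[R]_d) :
  gradient (fun th => kappa / 2 * eucl_norm (th - x) ^+ 2) a = kappa *: (a - x).
Proof.
apply/rowP => i; rewrite !mxE.
set K := kappa * (a 0 i - x 0 i).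
have key : forall h : R, h != 0 ->
   h^-1 *: (((fun th => kappa / 2 * eucl_norm (th - x) ^+ 2) \o shift a)
       (h *: delta_mx 0 i) - (kappa / 2 * eucl_norm (a - x) ^+ 2))
   = K + kappa / 2 * h.
  move=> h h0 /=; rewrite !eucl_sq /sq.
  rewrite -mulrBr -sumrB.
  rewrite (bigD1 i) //= big1; last first.
    by move=> j ji; rewrite !mxE (negbTE ji) andbF mulr0 add0r subrr.
  rewrite !mxE !eqxx /= mulr1 addr0 /K.
  set b := a 0 i - x 0 i.
  have -> : (h + a 0 i - x 0 i) = h + b by rewrite /b addrA.
  rewrite /GRing.scale /=. field. exact: h0.
have lim1 : (fun h => K + kappa / 2 * h) @ 0^' --> K.
  rewrite -[X in _ --> X]addr0.
  apply: cvgD; first exact: cvg_cst.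
  have hid : (fun h : R => h) @ 0^' --> (0:R) by exact: nbhs_dnbhs.
  have := cvgMl_tmp (a := kappa / 2) hid.
  by rewrite mulr0; apply.
rewrite /derive.
apply: cvg_lim => //.
apply: cvg_trans lim1.
apply: near_eq_cvg.
near=> h.
rewrite key //.
by near: h; exact: nbhs_dnbhs_neq.
Unshelve. all: by end_near. Qed.
End grad.
Section meas.
Variables (R : realType) (d : nat) (dO : measure_display) (Om : measurableType dO).

Lemma open_borel (U : set 'rV[R]_d) : open U -> borel_set U.
Proof. by move=> oU; apply: sub_sigma_algebra. Qed.

Lemma coord_meas (V : Om -> 'rV[R]_d) i :
  rv_measurable V -> measurable_fun setT (fun w => V w 0 i).
Proof.
move=> mV; apply: (measurability _ (measurable_realfun.RGenOInfty.measurableE R)) => //.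
move=> _ [_ [y ->] <-].
rewrite setTI.
have -> : (fun w => V w 0 i) @^-1` `]y, +oo[%classic =
   V @^-1` ((fun v : 'rV[R]_d => v 0 i) @^-1` `]y, +oo[%classic) by [].
apply: mV; apply: open_borel; apply: open_comp.
  by move=> v _; exact: coord_continuous.
rewrite (_ : `]y, +oo[%classic = [set x | x > y]); first exact: open_gt.
by apply/seteqP; split => x /=; rewrite in_itv /= andbT.
Qed.
End meas.
Lemma geom_small (R : realType) (a e : R) : 0 <= a < 1 -> 0 < e ->
  exists n : nat, a ^+ n < e.
Proof.
move=> /andP[a0 a1] e0.
have ha : `|a| < 1 by rewrite ger0_norm.
have := cvg_expr ha.
move/cvgrPdist_lt => /(_ e e0) [n0 _ Hn].
exists n0; have := Hn n0 (leqnn _).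
by rewrite sub0r normrN ger0_norm // exprn_ge0.
Qed.

Lemma final_ineq (R : realType) (c rho al be dl : R) : 0 < c -> c < 1 -> 0 < rho ->
  `|al| <= 2 * (c * rho / 100) -> `|be| <= c * rho / 100 -> `|dl| <= c * rho / 100 ->
  (al - be) ^+ 2 < ((1 - c) * al + c * (rho + dl) - be) ^+ 2.
Proof.
move=> c0 c1 r0; set r := c * rho / 100.
move=> /ler_normlP [ha1 ha2] /ler_normlP [hb1 hb2] /ler_normlP [hd1 hd2].
have hr : r <= rho / 100.
  rewrite /r ler_pM2r; last by lra.
  by rewrite ger_pMl // ltW.
have u0 : 0 < rho + dl - al by lra.
have hcr : 0 < c * rho by rewrite mulr_gt0.
have v0 : 0 < 2 * (al - be) + c * (rho + dl - al).
  have : c * (rho / 100 * 97) <= c * (rho + dl - al).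
    by rewrite ler_pM2l //; lra.
  rewrite /r in ha1 ha2 hb1 hb2; nra.
have -> : ((1 - c) * al + c * (rho + dl) - be) ^+ 2 =
   (al - be) ^+ 2 + (c * (rho + dl - al)) * (2 * (al - be) + c * (rho + dl - al)).
  by ring.
by rewrite ltrDl mulr_gt0 // mulr_gt0.
Qed.

Section Main.
Variables (R : realType) (d : nat) (kappa : R)
  (l : 'rV[R]_d -> 'rV[R]_d -> R) (gamma : R)
  (dO : measure_display) (Om : measurableType dO) (P : probability Om R)
  (X : int -> int -> Om -> 'rV[R]_d) (M MM : nat)
  (Theta : nat -> Om -> 'rV[R]_d) (N : nat).
Hypotheses (hd : (0 < d)%N) (hk : 0 < kappa)
  (hl : forall th vt, l th vt = kappa / 2 * eucl_norm (th - vt) ^+ 2)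
  (hg : 0 < gamma) (hgk : gamma < kappa^-1)
  (hXm : forall n m, rv_measurable (X n m))
  (hnd : forall n m, non_degenerate P (X n m))
  (hind : mutually_independent P (fun nm : int * int => X nm.1 nm.2))
  (hid : ident_distr P (fun nm : int * int => X nm.1 nm.2))
  (hM : (0 < M)%N) (hMM : (0 < MM)%N)
  (hT0 : rv_measurable (Theta 0%N))
  (hrec : forall (n : nat) (w : Om), (0 < n)%N ->
     Theta n w = Theta n.-1 w - (gamma / M%:R) *:
       (\sum_(1 <= m < M.+1)
          gradient (fun th => l th (X n%:Z m%:Z w)) (Theta n.-1 w)))
  (hbd : forall w, exists C : R, forall n m, eucl_norm (X n m w) <= C)
  (hN : (0 < N)%N).

Local Notation c := (gamma * kappa).
Lemma c_gt0 : 0 < c. Proof. by rewrite mulr_gt0. Qed.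
Lemma c_lt1 : c < 1.
Proof. by rewrite -ltr_pdivlMr // div1r. Qed.

Definition th n w i := Theta n w 0 i.
Definition xc n m w i := X n m w 0 i.

Lemma hl' th vt : l th vt = kappa / 2 * sq (th - vt).
Proof. by rewrite hl eucl_sq. Qed.

Lemma rec_coord n w i : (0 < n)%N ->
  th n w i = th n.-1 w i - gamma / M%:R *
     \sum_(1 <= m < M.+1) (kappa * (th n.-1 w i - xc n m w i)).
Proof.
move=> n0; rewrite /th hrec // !mxE summxE; congr (_ - _ * _).
apply: eq_bigr => m _.
have -> : (fun th => l th (X n m w)) =
   (fun th => kappa / 2 * eucl_norm (th - X n m w) ^+ 2).
  by apply: funext => th'; rewrite hl.
by rewrite grad_quad !mxE.
Qed.

Lemma step_aff (t t' y r : R) (xs : nat -> R) :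
  (forall m, (1 <= m <= M)%N -> `|xs m - y| <= r) ->
  t' = t - gamma / M%:R * \sum_(1 <= m < M.+1) (kappa * (t - xs m)) ->
  exists dl, `|dl| <= r /\ t' = (1 - c) * t + c * (y + dl).
Proof.
move=> hx ->.
have M0 : (M%:R : R) != 0 by rewrite pnatr_eq0 -lt0n.
exists ((\sum_(1 <= m < M.+1) (xs m - y)) / M%:R); split.
  rewrite normrM normfV normr_nat.
  rewrite ler_pdivrMr ?ltr0n //.
  apply: le_trans (ler_norm_sum _ _ _) _.
  apply: (@le_trans _ _ (\sum_(1 <= m < M.+1) r)).
    rewrite big_nat_cond [X in _ <= X]big_nat_cond.
    apply: ler_sum => m /andP[/andP [m1 m2] _]; apply: hx.
    by rewrite m1 -ltnS.
  by rewrite sumr_const_nat subn1 /= mulr_natr.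
rewrite -mulr_sumr !sumrB !sumr_const_nat subn1 /=.
set S := \sum_(1 <= i < M.+1) xs i.
rewrite -[t *+ M]mulr_natr -[y *+ M]mulr_natr.
by field.
Qed.

Definition inS (Rr : R) w :=
  (forall i, `|th 0 w i| <= Rr) /\ (forall (n m : int) i, `|xc n m w i| <= Rr).

Lemma th_bound Rr w : inS Rr w -> forall n i, `|th n w i| <= Rr.
Proof.
move=> [h0 hx]; elim=> [|n IH] i; first exact: h0.
have hx' : forall m, (1 <= m <= M)%N -> `|xc n.+1 m w i - 0| <= Rr.
  by move=> m _; rewrite subr0.
have [dl [hdl ->]] := step_aff hx' (rec_coord w i (ltn0Sn n)).
have c0 := c_gt0; have c1 := c_lt1.
rewrite add0r (le_trans (ler_normD _ _)) // !normrM -(normrM gamma kappa).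
rewrite (ger0_norm (ltW c0)) ger0_norm; last by lra.
have := IH i; nra.
Qed.

Lemma th_meas n i : measurable_fun setT (fun w => th n w i).
Proof.
elim: n => [|n IH]; first exact: coord_meas.
have -> : (fun w => th n.+1 w i) = (fun w => th n w i - gamma / M%:R *
     \sum_(1 <= m < M.+1) (kappa * (th n w i - xc n.+1 m w i))).
  by apply: funext => w; rewrite (rec_coord w i (ltn0Sn n)).
apply: measurable_realfun.measurable_funB => //; apply: measurable_realfun.measurable_funM; first exact: measurable_cst.
apply: measurable_sum => m; apply: measurable_realfun.measurable_funM; first exact: measurable_cst.
by apply: measurable_realfun.measurable_funB => //; exact: coord_meas.
Qed.

Lemma loss_meas n (k : int) : measurable_fun setT
  (fun w => \sum_(1 <= m < MM.+1) l (Theta n w) (X k (- m%:Z) w)).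
Proof.
have -> : (fun w => \sum_(1 <= m < MM.+1) l (Theta n w) (X k (- m%:Z) w)) =
  (fun w => \sum_(1 <= m < MM.+1) (kappa / 2 *
     \sum_(i < d) (th n w i - xc k (- m%:Z) w i) ^+ 2)).
  apply: funext => w; apply: eq_bigr => m _; rewrite hl' /sq; congr (_ * _).
  by apply: eq_bigr => i _; rewrite !mxE.
apply: measurable_sum => m; apply: measurable_realfun.measurable_funM; first exact: measurable_cst.
apply: measurable_sum => i; apply: measurable_realfun.measurable_funX.
by apply: measurable_realfun.measurable_funB; [exact: th_meas | exact: coord_meas].
Qed.

Definition Eset (n : nat) := [set w |
  \sum_(1 <= m < MM.+1) l (Theta n.-1 w) (X n%:Z (- m%:Z) w)
  < \sum_(1 <= m < MM.+1) l (Theta n w) (X n%:Z (- m%:Z) w)].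

Lemma Eset_meas n : measurable (Eset n).
Proof.
have := measurable_realfun.measurable_funB (loss_meas n n) (loss_meas n.-1 n) measurableT
   (measurable_itv `]0, +oo[).
rewrite setTI; congr measurable; apply/seteqP; split => w /=;
  by rewrite in_itv /= andbT subr_gt0.
Qed.

Local Notation Xf := (fun nm : int * int => X nm.1 nm.2).

Definition pr (A : set Om) : R := fine (P A).

Lemma P_fin A : measurable A -> P A = (pr A)%:E.
Proof.
move=> mA; rewrite /pr fineK // ge0_fin_numE ?measure_ge0 //.
by rewrite (le_lt_trans (probability_le1 P mA)) // ltry.
Qed.

Lemma pr_ge0 A : 0 <= pr A.
Proof. by rewrite /pr fine_ge0 // measure_ge0. Qed.

Lemma pr_le1 A : measurable A -> pr A <= 1.
Proof. by move=> mA; have := probability_le1 P mA; rewrite P_fin // lee_fin. Qed.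

Lemma pr_setD S G : measurable S -> measurable G ->
  pr (S `\` G) = pr S - pr (S `&` G).
Proof.
move=> mS mG; apply: EFin_inj; rewrite EFinB -!P_fin //;
  [|exact: measurableI|exact: measurableD].
rewrite measureD //. exact: (le_lt_trans (probability_le1 P mS) (ltry 1)).
Qed.

Section Pts.
Variables (z : 'rV[R]_d) (e : R).
Hypotheses (he : 0 < e) (hball : forall v, ball z e v -> rv_support P (X 0 0) v).

Definition rho := e / 2.
Definition rr := c * rho / 100.
Definition y1 := z.
Definition y2 := z + const_mx rho.

Lemma rho_gt0 : 0 < rho. Proof. by rewrite /rho divr_gt0. Qed.
Lemma rr_gt0 : 0 < rr.
Proof. by rewrite /rr divr_gt0 // mulr_gt0 // ?c_gt0 // rho_gt0. Qed.

Lemma ball_coord (y v : 'rV[R]_d) r : ball y r v -> forall i, `|v 0 i - y 0 i| < r.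
Proof. by case=> _ h i; have := h 0 i; rewrite /ball /= distrC. Qed.

Lemma y1_supp : rv_support P (X 0 0) y1.
Proof. by apply: hball; exact: ballxx. Qed.

Lemma y2_supp : rv_support P (X 0 0) y2.
Proof.
apply: hball; split => // i j; rewrite /ball /= !mxE opprD addrA subrr sub0r.
rewrite normrN gtr0_norm ?rho_gt0 // /rho. have := he; lra.
Qed.

Definition Bk (k : nat) (nm : int * int) : set 'rV[R]_d :=
  if (nm.2 < 0) then ball y1 rr
  else if ((absz nm.1 - N) %% k.+1 == k)%N then ball y2 rr else ball y1 rr.

Lemma Bk_borel k j : borel_set (Bk k j).
Proof. by rewrite /Bk; case: ifP => _; [|case: ifP => _]; apply: open_borel; exact: ball_open. Qed.

Lemma Bk_meas k j : measurable (Xf j @^-1` Bk k j).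
Proof. exact: hXm (Bk_borel k j). Qed.

Definition ev k (J : seq (int * int)) : set Om :=
  \bigcap_(j in [set j | j \in J]) (Xf j @^-1` Bk k j).

Lemma ev_nil k : ev k [::] = setT.
Proof. by apply/seteqP; split => // w _ j /=; rewrite in_nil. Qed.

Lemma ev_cons k j J : ev k (j :: J) = Xf j @^-1` Bk k j `&` ev k J.
Proof.
apply/seteqP; split => w /=.
  move=> h; split; first by apply: h; rewrite /= mem_head.
  by move=> j' /= hj'; apply: h; rewrite /= in_cons hj' orbT.
move=> [h1 h2] j' /=; rewrite in_cons => /orP [/eqP -> // | hj'].
exact: h2.
Qed.

Lemma ev_meas k J : measurable (ev k J).
Proof.
elim: J => [|j J IH]; first by rewrite ev_nil.
by rewrite ev_cons; apply: measurableI => //; exact: Bk_meas.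
Qed.

Lemma ev_cat k F J : ev k (F ++ J) = ev k F `&` ev k J.
Proof.
elim: F => [|j F IH]; first by rewrite ev_nil setTI.
by rewrite cat_cons !ev_cons IH setIA.
Qed.

Lemma ev_undup k J : ev k (undup J) = ev k J.
Proof. by apply/seteqP; split => w h j /= hj; apply: h => /=; rewrite ?mem_undup in hj *. Qed.

Lemma pr_ev k J : pr (ev k J) = \prod_(j <- undup J) pr (Xf j @^-1` Bk k j).
Proof.
apply: EFin_inj; rewrite -P_fin; last exact: ev_meas.
rewrite -prodEFin -ev_undup hind ?undup_uniq //; last by move=> j _; exact: Bk_borel.
by apply: eq_bigr => j _; rewrite -P_fin //; exact: Bk_meas.
Qed.

Lemma pr_cat k F J : (forall j, j \in J -> j \notin F) ->
  pr (ev k (F ++ J)) = pr (ev k F) * pr (ev k J).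
Proof.
move=> dj; rewrite !pr_ev undup_cat big_cat /=; congr (_ * _).
congr (\prod_(j <- _) _); apply/all_filterP; apply/allP => j.
rewrite mem_undup => jF; apply/negP => jJ.
by have := dj j jJ; rewrite jF.
Qed.


Definition Jw k t : seq (int * int) :=
  [seq (Posz (N + t * k.+1 + s), Posz m.+1) | s <- iota 0 k.+1, m <- iota 0 M]
  ++ [seq (Posz (N + t * k.+1 + k), - Posz m.+1) | m <- iota 0 MM].

Definition lab k (j : int * int) := ((absz j.1 - N) %/ k.+1)%N.

Lemma lab_aux k t s : (s < k.+1)%N -> ((N + t * k.+1 + s - N) %/ k.+1)%N = t.
Proof.
move=> hs; rewrite -addnA addKn divnMDl // divn_small // addn0 //.
Qed.

Lemma lab_Jw k t j : j \in Jw k t -> lab k j = t.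
Proof.
rewrite mem_cat => /orP [/allpairsP [[s m] [hs hm ->]] | /mapP [m hm ->]] /=;
  rewrite /lab /=; apply: lab_aux => //.
by move: hs; rewrite mem_iota add0n.
Qed.

Lemma size_Jw k t : size (Jw k t) = (k.+1 * M + MM)%N.
Proof. by rewrite size_cat size_allpairs size_map !size_iota. Qed.

Fixpoint avoid k a L : set Om :=
  match L with
  | 0%N => setT
  | L'.+1 => ~` ev k (Jw k a) `&` avoid k a.+1 L'
  end.

Lemma avoid_meas k L a : measurable (avoid k a L).
Proof.
elim: L a => [|L IH] a //=; apply: measurableI => //.
by apply: measurableC; exact: ev_meas.
Qed.

Lemma avoid_pr k L : forall a F, (forall j, j \in F -> (lab k j < a)%N) ->
  pr (ev k F `&` avoid k a L) =
  pr (ev k F) * \prod_(t < L) (1 - pr (ev k (Jw k (a + t)))).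
Proof.
elim: L => [|L IH] a F hF; first by rewrite /= setIT big_ord0 mulr1.
rewrite /=.
set A' := avoid k a.+1 L; set G := ev k (Jw k a).
have mA' : measurable A' by exact: avoid_meas.
have mG : measurable G by exact: ev_meas.
have mF : measurable (ev k F) by exact: ev_meas.
have -> : ev k F `&` (~` G `&` A') = (ev k F `&` A') `\` G.
  by apply/seteqP; split => w /=; tauto.
rewrite pr_setD //; last exact: measurableI.
have -> : ev k F `&` A' `&` G = ev k (F ++ Jw k a) `&` A'.
  by rewrite ev_cat; apply/seteqP; split => w /=; tauto.
have hF1 : forall j, j \in F -> (lab k j < a.+1)%N by move=> j /hF /ltnW.
have hF2 : forall j, j \in F ++ Jw k a -> (lab k j < a.+1)%N.
  by move=> j; rewrite mem_cat => /orP [/hF1 // | /lab_Jw -> //].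
rewrite /A' (IH _ _ hF1) (IH _ _ hF2).
rewrite pr_cat; last first.
  move=> j /lab_Jw hj; apply/negP => /hF; by rewrite hj ltnn.
rewrite big_ord_recl /= addn0.
have -> : \prod_(i < L) (1 - pr (ev k (Jw k (a + bump 0 i)))) =
          \prod_(i < L) (1 - pr (ev k (Jw k (a.+1 + i)))).
  by apply: eq_bigr => i _; rewrite /bump /= add1n addnS addSn.
rewrite -/G; ring.
Qed.

Definition p1 := pr (X 0 0 @^-1` ball y1 rr).
Definition p2 := pr (X 0 0 @^-1` ball y2 rr).
Definition pm := Num.min p1 p2.

Lemma ball_pr_gt0 y : rv_support P (X 0 0) y -> 0 < pr (X 0 0 @^-1` ball y rr).
Proof.
move=> hy; have := hy (ball y rr) (ball_open _ _) (ballxx _ rr_gt0).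
by rewrite P_fin ?lte_fin //; apply: hXm; apply: open_borel; exact: ball_open.
Qed.

Lemma pm_gt0 : 0 < pm.
Proof.
rewrite /pm lt_min; apply/andP; split; apply: ball_pr_gt0;
  [exact: y1_supp|exact: y2_supp].
Qed.

Lemma pm_le1 : pm <= 1.
Proof.
apply: (@le_trans _ _ p1); first by rewrite /pm ge_min lexx.
apply: pr_le1.
by apply: hXm; apply: open_borel; exact: ball_open.
Qed.

Lemma pr_single k j : pm <= pr (Xf j @^-1` Bk k j).
Proof.
have E : forall B, borel_set B -> pr (Xf j @^-1` B) = pr (X 0 0 @^-1` B).
  by move=> B hB; rewrite /pr (hid j (0, 0) hB).
rewrite E; last exact: Bk_borel.
rewrite /Bk.
case: ifP => _; [|case: ifP => _]; rewrite /pm /p1 /p2 ge_min lexx ?orbT //.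
Qed.

Lemma prod_lb (s : seq (int * int)) (f : int * int -> R) :
  (forall j, pm <= f j) -> pm ^+ size s <= \prod_(j <- s) f j.
Proof.
move=> hf; elim: s => [|j s IH]; first by rewrite big_nil expr0.
rewrite big_cons /= exprS; apply: ler_pM => //.
- exact: ltW pm_gt0.
- by apply: exprn_ge0; exact: ltW pm_gt0.
Qed.

Definition qmin k := pm ^+ (k.+1 * M + MM).

Lemma q_lb k t : qmin k <= pr (ev k (Jw k t)).
Proof.
rewrite pr_ev; apply: le_trans (prod_lb _ (pr_single k)).
rewrite /qmin -(size_Jw k t); apply: ler_wiXn2l.
- exact: ltW pm_gt0.
- exact: pm_le1.
- exact: size_undup.
Qed.

Lemma qmin_gt0 k : 0 < qmin k.
Proof. by rewrite /qmin exprn_gt0 // pm_gt0. Qed.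

Lemma pr_avoid k L : pr (avoid k 0 L) <= (1 - qmin k) ^+ L.
Proof.
have h0 : forall j, j \in ([::] : seq (int * int)) -> (lab k j < 0)%N by [].
have := @avoid_pr k L 0%N [::] h0.
rewrite ev_nil setTI => ->.
have -> : pr setT = 1 by rewrite /pr probability_setT.
rewrite mul1r.
have -> : (1 - qmin k) ^+ L = \prod_(t < L) (1 - qmin k) by rewrite prodr_const card_ord.
apply: ler_prod => t _.
apply/andP; split.
  by rewrite subr_ge0 pr_le1 //; exact: ev_meas.
by rewrite lerD2l lerN2 q_lb.
Qed.

Definition Zs k := \bigcap_L avoid k 0 L.

Lemma Zs_meas k : measurable (Zs k).
Proof. by apply: bigcapT_measurable => L; exact: avoid_meas. Qed.

Lemma Zs_null k : P (Zs k) = 0%E.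
Proof.
rewrite P_fin; last exact: Zs_meas.
congr (_%:E); apply/eqP; rewrite eq_le pr_ge0 andbT.
rewrite leNgt; apply/negP => hpos.
have hq := qmin_gt0 k.
have hq1 : qmin k <= 1 by apply: le_trans (q_lb k 0) _; apply: pr_le1; exact: ev_meas.
have hqa : 0 <= 1 - qmin k < 1 by apply/andP; split; lra.
have [L hL] := geom_small hqa hpos.
have : pr (Zs k) <= pr (avoid k 0 L).
  rewrite -lee_fin -(P_fin (avoid_meas _ _ _)) -(P_fin (Zs_meas _)).
  apply: le_measure; rewrite ?inE; [exact: Zs_meas|exact: avoid_meas|].
  by move=> w /(_ L I).
have := pr_avoid k L; lra.
Qed.

Lemma ev_mem k J w j : ev k J w -> j \in J -> Bk k j (Xf j w).
Proof. by move=> h hj; exact: h. Qed.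

Lemma Bk_train k t s m : (s <= k)%N ->
  Bk k (Posz (N + t * k.+1 + s), Posz m) =
  if s == k then ball y2 rr else ball y1 rr.
Proof.
move=> hs; rewrite /Bk /=.
by rewrite -addnA addKn modnMDl modn_small.
Qed.

Lemma Bk_test k n m : Bk k (n, - Posz m.+1) = ball y1 rr.
Proof. by []. Qed.

Lemma Jw_train k t s m : (s <= k)%N -> (1 <= m <= M)%N ->
  (Posz (N + t * k.+1 + s), Posz m) \in Jw k t.
Proof.
move=> hs; case: m => // m' /= hm; rewrite mem_cat; apply/orP; left.
apply/allpairsP; exists (s, m'); split; rewrite ?mem_iota /= ?add0n ?ltnS //.
Qed.

Lemma Jw_test k t m : (m < MM)%N ->
  (Posz (N + t * k.+1 + k), - Posz m.+1) \in Jw k t.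
Proof.
move=> hm; rewrite mem_cat; apply/orP; right.
by apply/mapP; exists m => //; rewrite mem_iota.
Qed.

Lemma window_E k Rr t w : inS Rr w ->
  (1 - c) ^+ k * (Rr + \sum_(i < d) `|y1 0 i|) <= rr ->
  ev k (Jw k t) w -> Eset (N + t * k.+1 + k) w.
Proof.
move=> hS hkk hev.
have c0 := c_gt0; have c1 := c_lt1; have r0 := rr_gt0; have rh0 := rho_gt0.
have htr : forall u m i, (u <= k)%N -> (1 <= m <= M)%N ->
    `|xc (N + t * k.+1 + u)%N m w i - (if u == k then y2 else y1) 0 i| <= rr.
  move=> u m i hu hm.
  have := ev_mem hev (@Jw_train k t u m hu hm); rewrite Bk_train //.
  by case: (u == k) => /= hb; apply: ltW; exact: (ball_coord hb i).
have hte : forall m i, (m < MM)%N ->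
    `|xc (N + t * k.+1 + k)%N (- Posz m.+1) w i - y1 0 i| <= rr.
  move=> m i hm.
  have := ev_mem hev (Jw_test k t hm); rewrite Bk_test => hb.
  by apply: ltW; exact: (ball_coord hb i).
have Dle : forall i, `|y1 0 i| <= \sum_(j < d) `|y1 0 j|.
  by move=> i; rewrite (bigD1 i) //= lerDl sumr_ge0.
set s0 := (N + t * k.+1)%N.
have s0pos : (0 < s0)%N by rewrite /s0 (leq_trans hN) // leq_addr.
have claim : forall i u, (u <= k)%N ->
    `|th (s0 + u).-1 w i - y1 0 i| <= (1 - c) ^+ u * (Rr + `|y1 0 i|) + rr.
  move=> i; elim=> [|u IH] hu.
    rewrite addn0 expr0 mul1r.
    have := th_bound hS s0.-1 i; have := ler_normB (th s0.-1 w i) (y1 0 i).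
    lra.
  have hu' : (u < k)%N by [].
  have hx : forall m, (1 <= m <= M)%N ->
      `|(fun m0 : nat => xc (s0 + u)%N m0 w i) m - y1 0 i| <= rr.
    by move=> m hm; have := htr u m i (ltnW hu') hm; rewrite ltn_eqF.
  have hpos : (0 < s0 + u)%N by rewrite (leq_trans s0pos) // leq_addr.
  have [dl [hdl he1]] := step_aff hx (rec_coord w i hpos).
  rewrite addnS /= he1.
  have -> : (1 - c) * th (s0 + u).-1 w i + c * (y1 0 i + dl) - y1 0 i =
            (1 - c) * (th (s0 + u).-1 w i - y1 0 i) + c * dl by ring.
  apply: le_trans (ler_normD _ _) _.
  rewrite !normrM -(normrM gamma kappa) (ger0_norm (ltW c0)) ger0_norm; last by lra.
  have := IH (ltnW hu'); rewrite exprS.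
  set A := `|th (s0 + u).-1 w i - y1 0 i|.
  set Q := (1 - c) ^+ u * (Rr + `|y1 0 i|).
  move=> hA.
  have -> : (1 - c) * (1 - c) ^+ u * (Rr + `|y1 0 i|) = (1 - c) * Q by rewrite /Q mulrA.
  nra.
rewrite /Eset /= -/s0.
rewrite big_nat_cond [X in _ < X]big_nat_cond.
apply: ltr_sum.
  by apply/hasP; exists 1%N; rewrite ?mem_index_iota /= ?ltnS ?andbT.
move=> m /andP [/andP [m1 m2] _].
case: m m1 m2 => // m' _ m2.
rewrite !hl' /sq ltr_pM2l; last by rewrite divr_gt0.
apply: ltr_sum.
  by apply/hasP; exists (Ordinal hd); rewrite ?mem_index_enum.
move=> i _; rewrite !mxE.
have hx2 : forall m, (1 <= m <= M)%N ->
    `|(fun m0 : nat => xc (s0 + k)%N m0 w i) m - y2 0 i| <= rr.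
  by move=> m hm; have := htr k m i (leqnn k) hm; rewrite eqxx.
have hpos : (0 < s0 + k)%N by rewrite (leq_trans s0pos) // leq_addr.
have [dl [hdl he1]] := step_aff hx2 (rec_coord w i hpos).
rewrite /th in he1; rewrite he1.
have hA := claim i k (leqnn k).
have hB := hte m' i m2.
set a := Theta (s0 + k).-1 w 0 i.
set Y := X (Posz (s0 + k)) (- Posz m'.+1) w 0 i.
have hy2 : y2 0 i = y1 0 i + rho by rewrite /y2 !mxE.
rewrite hy2.
have hal : `|a - y1 0 i| <= 2 * (c * rho / 100).
  have : (1 - c) ^+ k * (Rr + `|y1 0 i|) <= rr.
    apply: le_trans hkk; apply: ler_wpM2l; first by apply: exprn_ge0; lra.
    by rewrite lerD2l.
  rewrite /rr in hA * => h'; move: hA; rewrite /th -/a; lra.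
have hbe : `|Y - y1 0 i| <= c * rho / 100 by move: hB; rewrite /xc /rr.
have hdl' : `|dl| <= c * rho / 100 by move: hdl; rewrite /rr.
have := final_ineq c0 c1 rh0 hal hbe hdl'.
have -> : a - y1 0 i - (Y - y1 0 i) = a - Y by ring.
have -> : (1 - c) * (a - y1 0 i) + c * (rho + dl) - (Y - y1 0 i) =
          (1 - c) * a + c * (y1 0 i + rho + dl) - Y by ring.
by [].
Qed.

Lemma coord_le_norm (v : 'rV[R]_d) i : `|v 0 i| <= eucl_norm v.
Proof.
rewrite -sqrtr_sqr /eucl_norm ler_sqrt; last by rewrite sumr_ge0 // => j _; rewrite sqr_ge0.
by rewrite (bigD1 i) //= lerDl sumr_ge0 // => j _; rewrite sqr_ge0.
Qed.

Lemma final_pts :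
  P (\bigcup_(n in [set n : nat | (N <= n)%N]) Eset n) = 1%E.
Proof.
set U := \bigcup_(n in [set n : nat | (N <= n)%N]) Eset n.
have mU : measurable U by apply: bigcup_measurable => n _; exact: Eset_meas.
set Ys := \sum_(i < d) `|y1 0 i|.
have Ys0 : 0 <= Ys by rewrite sumr_ge0.
have c0 := c_gt0; have c1 := c_lt1; have r0 := rr_gt0.
have /choice [kf hkf] : forall Rn : nat, exists k : nat,
    (1 - c) ^+ k * (Rn%:R + Ys) <= rr.
  move=> Rn.
  have hqa : 0 <= 1 - c < 1 by apply/andP; split; lra.
  have D0 : 0 < Rn%:R + Ys + 1 by have := ler0n R Rn; lra.
  have pos : 0 < rr / (Rn%:R + Ys + 1) by rewrite divr_gt0.
  have [k hk0] := geom_small hqa pos.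
  exists k; move: hk0; rewrite ltr_pdivlMr // => hk0.
  have : 0 <= (1 - c) ^+ k by apply: exprn_ge0; lra.
  nra.
have sub : ~` U `<=` \bigcup_(Rn : nat) Zs (kf Rn).
  move=> w hw.
  have [C hC] := hbd w.
  set T0 := \sum_(i < d) `|th 0 w i|.
  have C0 : 0 <= C by apply: le_trans (hC 0 0); rewrite /eucl_norm sqrtr_ge0.
  have T00 : 0 <= T0 by rewrite sumr_ge0.
  set Rn := (Num.truncn (C + T0)).+1.
  have hS : inS Rn%:R w.
    have lt := truncnS_gt (C + T0).
    split.
      move=> i; have : `|th 0 w i| <= T0 by rewrite /T0 (bigD1 i) //= lerDl sumr_ge0.
      rewrite /Rn; lra.
    move=> n m i; have := coord_le_norm (X n m w) i; have := hC n m.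
    rewrite /xc /Rn; lra.
  exists Rn => //.
  set k := kf Rn.
  have noG : forall t, ~ ev k (Jw k t) w.
    move=> t hev; apply: hw; exists (N + t * k.+1 + k)%N.
      by rewrite /= -addnA leq_addr.
    exact: window_E hS (hkf Rn) hev.
  have gen : forall L a, avoid k a L w.
    elim => [|L' IH] a; first by [].
    by split; [exact: noG | exact: IH].
  by move=> L _; exact: gen.
have neg : P.-negligible (~` U).
  apply: (negligibleS sub); apply: negligible_bigcup => Rn.
  by apply/negligibleP; [exact: Zs_meas | exact: Zs_null].
have h0 : P (~` U) = 0%E by apply/negligibleP => //; exact: measurableC.
move: h0; rewrite probability_setC // P_fin // => h.
congr (_%:E).
have : (1 - pr U)%:E = (0 : R)%:E by rewrite EFinB.
move=> h1; have := EFin_inj h1; lra.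
Qed.

End Pts.
End Main.

Unset Implicit Arguments.
Set Strict Implicit.

Theorem corollary6p15 (R : realType) (d : nat) (kappa : R)
  (l : 'rV[R]_d -> 'rV[R]_d -> R) (gamma : R)
  (dO : measure_display) (Om : measurableType dO) (P : probability Om R)
  (X : int -> int -> Om -> 'rV[R]_d) (M MM : nat)
  (Theta : nat -> Om -> 'rV[R]_d) (N : nat) :
  (0 < d)%N -> 0 < kappa ->
  (forall th vt, l th vt = kappa / 2 * eucl_norm (th - vt) ^+ 2) ->
  0 < gamma -> gamma < kappa^-1 ->
  (forall n m, rv_measurable (X n m)) ->
  (forall n m, non_degenerate P (X n m)) ->
  mutually_independent P (fun nm : int * int => X nm.1 nm.2) ->
  ident_distr P (fun nm : int * int => X nm.1 nm.2) ->
  (0 < M)%N -> (0 < MM)%N ->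
  rv_measurable (Theta 0%N) ->
  (forall (n : nat) (w : Om), (0 < n)%N ->
     Theta n w = Theta n.-1 w - (gamma / M%:R) *:
       (\sum_(1 <= m < M.+1)
          gradient (fun th => l th (X n%:Z m%:Z w)) (Theta n.-1 w))) ->
  (forall w, exists C : R, forall n m, eucl_norm (X n m w) <= C) ->
  indep_of_family P (fun nm : int * int => X nm.1 nm.2) (Theta 0%N) ->
  (0 < N)%N ->
  P (\bigcup_(n in [set n : nat | (N <= n)%N])
       [set w | \sum_(1 <= m < MM.+1) l (Theta n.-1 w) (X n%:Z (- m%:Z) w)
              < \sum_(1 <= m < MM.+1) l (Theta n w) (X n%:Z (- m%:Z) w)])
  = 1%E.
Proof.
move=> hd hk hl hg hgk hXm hnd hind hid hM hMM hT0 hrec hbd hind0 hN.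
have [z hz] := hnd 0 0.
move: hz => /nbhs_ballP [e e0 hb].
exact: (final_pts hd hk hl hg hgk hXm hind hid hM hMM hT0 hrec hbd hN e0 hb).
Qed.
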